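(* Let $(Y,D)$ be binary random variables and $Z$ a random vector, and define $\underline q_{10}=\inf_{z\in \mathrm{Supp}(Z)}\mathbb P(Y=1,D=0\mid Z=z)$, $\underline q_{11}=\inf_{z}\mathbb P(Y=1,D=1\mid Z=z)$, $\bar q_{10}=\sup_{z}\mathbb P(Y=1,D=0\mid Z=z)$, $\bar q_{11}=\sup_{z}\mathbb P(Y=1,D=1\mid Z=z)$ (assumed well defined). Then in the binary Roy model (and the alternative binary Roy model) with $(Y_0,Y_1)$ independent of $Z$, the identified set for the pair $(\mathbb EY_0,\mathbb EY_1)$ is given by $$\bar q_{10}\le \mathbb EY_0\le \mathbb P(Y=1)\quad\text{and}\quad \bar q_{11}\le \mathbb EY_1\le \mathbb P(Y=1);$$ that is, these inequalities hold for any $(Y_0,Y_1)$ compatible with the model and the distribution of $(Y,D,Z)$, and (when $Y$ is independent of $Z$) every pair $(a_0,a_1)$ satisfying them equals $(\mathbb EY_0,\mathbb EY_1)$ for some binary $(Y_0,Y_1)$, independent of $Z$, satisfying the model jointly with a random vector distributed as $(Y,D,Z)$.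
   Context: All random variables are on a common probability space. Binary Roy model: $Y_0,Y_1\in\{0,1\}$, $Y=Y_1D+Y_0(1-D)$, and almost surely $Y_1>Y_0\Rightarrow D=1$, $Y_1<Y_0\Rightarrow D=0$. Alternative binary Roy model: $Y=Y_1D+Y_0(1-D)$ with $Y_d=1\{Y_d^\ast>0\}$ for real latent $(Y_0^\ast,Y_1^\ast)$ and almost surely $Y_1^\ast>Y_0^\ast\Rightarrow D=1$, $Y_1^\ast<Y_0^\ast\Rightarrow D=0$. $\mathrm{Supp}(Z)$ is the support of $Z$. *)

(* Defs.v *)
From HB Require Import structures.
From mathcomp Require Import all_boot all_order all_algebra.
From mathcomp Require Import all_classical all_reals all_analysis.
Set Implicit Arguments. Unset Strict Implicit. Unset Printing Implicit Defensive.
Import Order.TTheory GRing.Theory Num.Theory.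
Local Open Scope classical_set_scope.
Local Open Scope ring_scope.

Section roy_defs.
Context {R : realType} {d : measure_display} {T : measurableType d}.
Variable P : probability T R.

(* the event {X = 1} for a binary (bool-valued, true = 1) random variable *)
Definition ev (X : T -> bool) : set T := [set t | X t].

Definition Ebin (X : T -> bool) : R := fine (P (ev X)).

(* q is a version of the conditional probability z |-> P(A | Z = z):
   q is measurable and P(A /\ Z \in B) = \int_{Z \in B} q(Z) dP for all Borel B *)
Definition cond_prob_version (k : nat) (A : set T) (Z : T -> k.-tuple R)
    (q : k.-tuple R -> R) : Prop :=
  measurable_fun setT q /\
  forall B : set (k.-tuple R), measurable B ->
    P (A `&` Z @^-1` B) = (\int[P]_(t in Z @^-1` B) (q (Z t))%:E)%E.

Definition tball (k : nat) (z : k.-tuple R) (e : R) : set (k.-tuple R) :=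
  [set w | forall i : 'I_k, `|tnth w i - tnth z i| < e].

Definition Supp (k : nat) (Z : T -> k.-tuple R) : set (k.-tuple R) :=
  [set z | forall e : R, 0 < e -> (0 < P (Z @^-1` tball z e))%E].

Definition continuous_on_set (k : nat) (S : set (k.-tuple R))
    (f : k.-tuple R -> R) : Prop :=
  forall z, S z -> forall eps : R, 0 < eps -> exists2 delta : R, 0 < delta &
    forall w, S w -> tball z delta w -> `|f w - f z| < eps.

Definition indep_pair_Z (k : nat) (Y0 Y1 : T -> bool) (Z : T -> k.-tuple R) :
    Prop :=
  forall (b0 b1 : bool) (B : set (k.-tuple R)), measurable B ->
    P ([set t | Y0 t = b0 /\ Y1 t = b1] `&` Z @^-1` B) =
    (P [set t | Y0 t = b0 /\ Y1 t = b1] * P (Z @^-1` B))%E.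

Definition indep_Z (k : nat) (Y : T -> bool) (Z : T -> k.-tuple R) : Prop :=
  forall (b : bool) (B : set (k.-tuple R)), measurable B ->
    P ([set t | Y t = b] `&` Z @^-1` B) =
    (P [set t | Y t = b] * P (Z @^-1` B))%E.

Definition binary_roy (Y D Y0 Y1 : T -> bool) : Prop :=
  (forall t, Y t = (if D t then Y1 t else Y0 t)) /\
  {ae P, forall t, (Y1 t && ~~ Y0 t) -> D t} /\
  {ae P, forall t, (Y0 t && ~~ Y1 t) -> ~~ D t}.

Definition latent_outcome (Ys : T -> R) : T -> bool := fun t => 0 < Ys t.

Definition alt_binary_roy (Y D : T -> bool) (Y0s Y1s : T -> R) : Prop :=
  (forall t, Y t = (if D t then latent_outcome Y1s t
                    else latent_outcome Y0s t)) /\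
  {ae P, forall t, Y0s t < Y1s t -> D t} /\
  {ae P, forall t, Y1s t < Y0s t -> ~~ D t}.

End roy_defs.

(* (Y', D', Z') under P' has the same joint law as (Y, D, Z) under P
   (equality on all measurable rectangles {b} x {c} x B, which generate the
   product sigma-algebra on bool * bool * R^k) *)
Definition same_law {R : realType} {d d' : measure_display}
    {T : measurableType d} {T' : measurableType d'} (k : nat)
    (P : probability T R) (P' : probability T' R)
    (Y D : T -> bool) (Z : T -> k.-tuple R)
    (Y' D' : T' -> bool) (Z' : T' -> k.-tuple R) : Prop :=
  forall (b c : bool) (B : set (k.-tuple R)), measurable B ->
    P' ([set t | Y' t = b /\ D' t = c] `&` Z' @^-1` B) =
    P ([set t | Y t = b /\ D t = c] `&` Z @^-1` B).

(* Main.v *)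
Require Import Defs.
From HB Require Import structures.
From mathcomp Require Import all_boot all_order all_algebra.
From mathcomp Require Import all_classical all_reals all_analysis.
From mathcomp Require Import lra measurable_realfun.
Import Order.TTheory GRing.Theory Num.Theory.
Local Open Scope classical_set_scope.
Local Open Scope ring_scope.


Section supp.
Context {R : realType} {d : measure_display} {T : measurableType d}.
Variable P : probability T R.
Variable k : nat.
Variable Z : T -> k.-tuple R.
Hypothesis mZ : measurable_fun setT Z.

Lemma tball_meas (z : k.-tuple R) e : measurable (tball z e).
Proof.
have -> : tball z e = \bigcap_(i in [set: 'I_k])
    ((fun w => tnth w i) @^-1` `]tnth z i - e, tnth z i + e[).
  apply/seteqP; split => w /=.
    by move=> H i _ /=; rewrite in_itv /= -ltr_distlC distrC; exact: H.
  by move=> H i; have := H i I; rewrite /= in_itv /= -ltr_distlC distrC.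
apply: fin_bigcap_measurable => [|i _]; first exact: finite_finset.
by have := @measurable_tnth _ _ k i measurableT _ (measurable_itv `]tnth z i - e, tnth z i + e[); rewrite setTI.

Qed.

Lemma preimZ_meas {B : set (k.-tuple R)} : measurable B -> measurable (Z @^-1` B).
Proof. by move=> mB; rewrite -[X in measurable X]setTI; exact: mZ. Qed.


Lemma supp_null : exists N, [/\ measurable N, P (Z @^-1` N) = 0%E & ~` Supp P Z `<=` N].
Proof.
pose G (p : (k.-tuple rat * rat)%type) : set (k.-tuple R) :=
  tball (map_tuple (@ratr R) p.1) (ratr p.2).
pose F (n : nat) := match @unpickle (k.-tuple rat * rat)%type n with
  | Some p => if P (Z @^-1` G p) == 0%E then G p else set0
  | None => set0 end.
have mF n : measurable (F n).
  rewrite /F; case: unpickle => [p|]; last exact: measurable0.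
  by case: ifP => _; [exact: tball_meas|exact: measurable0].
exists (\bigcup_n F n); split.
- exact: bigcupT_measurable.
- rewrite preimage_bigcup; apply: measure_negligible.
    by apply: bigcupT_measurable => n; apply: preimZ_meas.
  apply: negligible_bigcup => n; rewrite /F; case: unpickle => [p|]; last first.
    by rewrite preimage_set0; exact: negligible_set0.
  case: ifPn => [/eqP H|_]; last by rewrite preimage_set0; exact: negligible_set0.
  by exists (Z @^-1` G p); split => //; apply: preimZ_meas; exact: tball_meas.
- move=> w /= nw.
  have [e [e0 He]] : exists e, 0 < e /\ P (Z @^-1` tball w e) = 0%E.
    apply: contra_notP nw => H e e0.
    rewrite lt_def measure_ge0 andbT; apply/eqP => H0; apply: H; exists e; split => //.
  have hc : forall i : 'I_k, exists q : rat,
      ratr q \in `](tnth w i - e / 3), (tnth w i + e / 3)[.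
    by move=> i; apply: rat_in_itvoo; lra.
  have [f hf] := fin_all_exists hc.
  have [r hr] : exists r : rat, ratr r \in `](e / 3), (2 * e / 3)[.
    by apply: rat_in_itvoo; lra.
  pose p := (mktuple f, r).
  have wG : G p w.
    move=> i; rewrite /p /= tnth_map tnth_mktuple.
    move: (hf i) hr; rewrite !in_itv /= => /andP[h1 h2] /andP[h3 h4].
    rewrite ltr_distlC; apply/andP; split; lra.
  have Gsub : G p `<=` tball w e.
    move=> v Hv i; have := Hv i; rewrite /p /= tnth_map tnth_mktuple.
    move: (hf i) hr; rewrite !in_itv /= => /andP[h1 h2] /andP[h3 h4].
    rewrite !ltr_distlC => /andP[h5 h6]; apply/andP; split; lra.
  have G0 : P (Z @^-1` G p) = 0%E.
    apply/eqP; rewrite eq_le measure_ge0 andbT -He.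
    by apply: le_measure; rewrite ?inE; [apply: preimZ_meas; exact: tball_meas..|
      exact: preimage_subset].
  exists (pickle p) => //; rewrite /F pickleK G0 eqxx; exact: wG.
Qed.


Lemma meas_gt (f : k.-tuple R -> R) c : measurable_fun setT f ->
  measurable [set w | c < f w].
Proof.
move=> mf; have := mf measurableT _ (measurable_itv `]c, +oo[); rewrite setTI.
have -> // : [set w | c < f w] = f @^-1` `]c, +oo[%classic.
by apply/seteqP; split => w /=; rewrite in_itv /= andbT.
Qed.

Lemma supp_le0 (f : k.-tuple R -> R) : measurable_fun setT f ->
  continuous_on_set (Supp P Z) f ->
  (forall e, 0 < e -> P (Z @^-1` [set w | e < f w]) = 0%E) ->
  forall z, Supp P Z z -> f z <= 0.
Proof.
move=> mf cf H z Sz; rewrite leNgt; apply/negP => fz0.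
have [N [mN N0 sN]] := supp_null.
have fz2 : 0 < f z / 2 by lra.
have [dl dl0 Hdl] := cf z Sz (f z / 2) fz2.
have := Sz dl dl0; apply/negP; rewrite -leNgt.
have : P.-negligible (Z @^-1` tball z dl).
  apply: (negligibleS _ (negligibleU (A:=Z @^-1` [set w | f z / 2 < f w])
     (B := Z @^-1` N) _ _)).
  - move=> t Ht; case: (pselect (Supp P Z (Z t))) => S; last by right; exact: sN.
    left; have := Hdl _ S Ht; rewrite /= ltr_distlC => /andP[h1 h2]; lra.
  - exists (Z@^-1` [set w | f z / 2 < f w]); split => //.
      by apply: preimZ_meas; exact: meas_gt.
    by apply: H.
  - by exists (Z @^-1` N); split => //; exact: preimZ_meas.
by move/(measure_negligible (preimZ_meas (tball_meas z dl))) => ->.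
Qed.

Lemma ae_upper (A : set T) (q : k.-tuple R -> R) (c : R) : measurable A ->
  cond_prob_version P A Z q -> 0 <= c ->
  (forall B, measurable B ->
     (P (A `&` Z @^-1` B) <= c%:E * P (Z @^-1` B))%E) ->
  forall e, 0 < e -> P (Z @^-1` [set w | e < q w - c]) = 0%E.
Proof.
move=> mA [mq Hq] c0 HB e e0.
set B := [set w | e < q w - c].
have mB : measurable B.
  by apply: meas_gt; apply: measurable_funB => //; exact: measurable_cst.
set D := Z @^-1` B; have mD : measurable D by exact: preimZ_meas.
have h1 : ((c + e)%:E * P D <= \int[P]_(t in D) (q (Z t))%:E)%E.
  rewrite -integral_cst //; apply: ge0_le_integral => //.
  - by move=> t _; rewrite lee_fin; lra.
  - apply/measurable_EFinP; apply: measurable_funTS.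
    exact: measurableT_comp.
  - by move=> t Dt; rewrite lee_fin /=; move: Dt; rewrite /D /B /=; lra.
rewrite -Hq // in h1.
have := le_trans h1 (HB B mB).
rewrite -(fineK (fin_num_measure P D mD)) -!EFinM lee_fin => h2.
have hge : 0 <= fine (P D) by apply: fine_ge0; exact: measure_ge0.
rewrite -(fineK (fin_num_measure P D mD)); congr EFin; nra.
Qed.

Lemma ae_lower (A : set T) (q : k.-tuple R -> R) : measurable A ->
  cond_prob_version P A Z q ->
  forall e, 0 < e -> P (Z @^-1` [set w | e < - q w]) = 0%E.
Proof.
move=> mA [mq Hq] e e0.
set B := [set w | e < - q w].
have mB : measurable B.
  apply: (@meas_gt (fun w => - q w)).
  exact: (measurableT_comp (@oppr_measurable R setT) mq).
set D := Z @^-1` B; have mD : measurable D by exact: preimZ_meas.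
have mqZ : measurable_fun D (fun t => (q (Z t))%:E).
  by apply/measurable_EFinP; apply: measurable_funTS; exact: measurableT_comp.
have h0 := Hq B mB; rewrite integralE in h0.
have hp : (\int[P]_(t in D) ((fun t => (q (Z t))%:E)^\+ t) = 0)%E.
  apply: integral0_eq => t Dt; rewrite funeposE; apply/max_idPr.
  by rewrite lee_fin; move: Dt; rewrite /D /B /=; lra.
rewrite hp sub0e in h0.
have h1 : (e%:E * P D <= \int[P]_(t in D) ((fun t => (q (Z t))%:E)^\- t))%E.
  rewrite -integral_cst //; apply: ge0_le_integral => //.
  - by move=> t _; rewrite lee_fin; lra.
  - exact: measurable_funeneg.
  - move=> t Dt; rewrite funenegE /= le_max; apply/orP; left.
    by rewrite lee_fin; move: Dt; rewrite /D /B /=; lra.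
have h2 : (0 <= P (A `&` D))%E by apply: measure_ge0; exact: measurableI.
rewrite h0 oppe_ge0 in h2.
have := le_trans h1 h2.
rewrite -(fineK (fin_num_measure P D mD)) -!EFinM lee_fin => h3.
have hge : 0 <= fine (P D) by apply: fine_ge0; exact: measure_ge0.
rewrite -(fineK (fin_num_measure P D mD)); congr EFin; nra.
Qed.

End supp.


Section valid.
Context {R : realType} {d : measure_display} {T : measurableType d}.
Variable P : probability T R.
Variable k : nat.
Variable Z : T -> k.-tuple R.
Hypothesis mZ : measurable_fun setT Z.

Lemma meas_bool (X : T -> bool) b : measurable_fun setT X ->
  measurable [set t | X t = b].
Proof.
move=> mX; have := mX measurableT [set b] I; rewrite setTI.
by have -> : X @^-1` [set b] = [set t | X t = b].
Qed.

Lemma meas_ev (X : T -> bool) : measurable_fun setT X -> measurable (ev X).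
Proof.
move=> mX; have -> : ev X = [set t | X t = true] by [].
exact: meas_bool.
Qed.

Lemma sup_le_of (S : set R) c : 0 <= c -> (forall x, S x -> x <= c) ->
  sup S <= c.
Proof.
move=> c0 H; have [->|ne] := eqVneq S set0; first by rewrite sup0.
by apply: ge_sup; [exact/set0P|move=> x Sx; exact: H].
Qed.

Lemma Ebin_ge0 (X : T -> bool) : 0 <= Ebin P X.
Proof. by apply: fine_ge0; exact: measure_ge0. Qed.

Lemma Ebin_E (X : T -> bool) : measurable_fun setT X ->
  P (ev X) = (Ebin P X)%:E.
Proof. by move=> mX; rewrite /Ebin fineK // fin_num_measure //; exact: meas_ev. Qed.

Lemma valid_one (Yd : T -> bool) (A : set T) (q : k.-tuple R -> R) :
  measurable_fun setT Yd -> measurable A -> A `<=` ev Yd ->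
  (forall B, measurable B ->
     P (ev Yd `&` Z @^-1` B) = (P (ev Yd) * P (Z @^-1` B))%E) ->
  cond_prob_version P A Z q -> continuous_on_set (Supp P Z) q ->
  forall z, Supp P Z z -> q z <= Ebin P Yd.
Proof.
move=> mYd mA AY ind cq ctq z Sz.
rewrite -subr_le0.
have mq := cq.1.
apply: (@supp_le0 _ _ _ P k Z mZ (fun w => q w - Ebin P Yd)) => //.
- by apply: measurable_funB => //; exact: measurable_cst.
- move=> w Sw e e0; have [dl dl0 H] := ctq w Sw e e0.
  by exists dl => // v Sv Hv; rewrite opprB addrA subrK; exact: H.
- move=> e e0; apply: (@ae_upper _ _ _ P k Z mZ A q _ mA cq (Ebin_ge0 Yd)) => // B mB.
  rewrite -Ebin_E // -ind //; apply: le_measure; rewrite ?inE.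
  + by apply: measurableI => //; exact: preimZ_meas.
  + by apply: measurableI; [exact: meas_ev|exact: preimZ_meas].
  + by apply: setSI.
Qed.

Lemma Ebin_le (X Y : T -> bool) : measurable_fun setT X -> measurable_fun setT Y ->
  P.-negligible (ev X `\` ev Y) -> Ebin P X <= Ebin P Y.
Proof.
move=> mX mY Hn.
have mD : measurable (ev X `\` ev Y) by apply: measurableD; exact: meas_ev.
have N0 := measure_negligible mD Hn.
rewrite -lee_fin -!Ebin_E //.
apply: (@le_trans _ _ (P (ev Y `|` (ev X `\` ev Y)))).
  apply: le_measure; rewrite ?inE; first exact: meas_ev.
    by apply: measurableU => //; exact: meas_ev.
  by move=> t Xt; case: (pselect (ev Y t)) => h; [left|right].
apply: (le_trans (measureU2 _ _ _)) => //; first exact: meas_ev.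
by rewrite N0 adde0.
Qed.


Lemma indep_first (X W : T -> bool) : measurable_fun setT X -> measurable_fun setT W ->
  (forall b0 b1 B, measurable B ->
    P ([set t | X t = b0 /\ W t = b1] `&` Z @^-1` B) =
    (P [set t | X t = b0 /\ W t = b1] * P (Z @^-1` B))%E) ->
  forall B, measurable B ->
    P (ev X `&` Z @^-1` B) = (P (ev X) * P (Z @^-1` B))%E.
Proof.
move=> mX mW H B mB.
have E : ev X = [set t | X t = true /\ W t = true] `|`
                [set t | X t = true /\ W t = false].
  apply/seteqP; split => t /=; last by case=> -[].
  by rewrite /ev /= => ->; case: (W t); [left|right].
have mS b1 : measurable [set t | X t = true /\ W t = b1].
  have -> : [set t | X t = true /\ W t = b1] =
            [set t | X t = true] `&` [set t | W t = b1] by [].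
  by apply: measurableI; exact: meas_bool.
have mZB : measurable (Z @^-1` B) by exact: preimZ_meas.
rewrite E setIUl !measureU //; last first.
all: try (by apply: measurableI).
all: try (by apply/seteqP; split => t //= [[[_ h1] _] [[_ h2] _]]; congruence).
all: try (by apply/seteqP; split => t //= [[_ h1] [_ h2]]; congruence).
transitivity (P [set t | X t = true /\ W t = true] * P (Z @^-1` B) +
   P [set t | X t = true /\ W t = false] * P (Z @^-1` B))%E.
  by congr (_ + _)%E; apply: H.
by rewrite ge0_muleDl //; exact: measure_ge0.
Qed.

Lemma indep_both (Y0 Y1 : T -> bool) : measurable_fun setT Y0 -> measurable_fun setT Y1 ->
  indep_pair_Z P Y0 Y1 Z ->
  (forall B, measurable B ->
    P (ev Y0 `&` Z @^-1` B) = (P (ev Y0) * P (Z @^-1` B))%E) /\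
  (forall B, measurable B ->
    P (ev Y1 `&` Z @^-1` B) = (P (ev Y1) * P (Z @^-1` B))%E).
Proof.
move=> m0 m1 ind; split; first exact: (indep_first Y0 Y1 m0 m1 ind).
apply: (indep_first Y1 Y0 m1 m0) => b0 b1 B mB.
have -> : [set t | Y1 t = b0 /\ Y0 t = b1] = [set t | Y0 t = b1 /\ Y1 t = b0].
  by apply/seteqP; split => t /= [h1 h2]; split.
exact: ind.
Qed.

Variables (Y D : T -> bool).
Hypotheses (mY : measurable_fun setT Y) (mD : measurable_fun setT D).

Lemma valid_binary (q10 q11 : k.-tuple R -> R) (Y0 Y1 : T -> bool) :
  cond_prob_version P (ev Y `&` ~` ev D) Z q10 ->
  cond_prob_version P (ev Y `&` ev D) Z q11 ->
  continuous_on_set (Supp P Z) q10 -> continuous_on_set (Supp P Z) q11 ->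
  measurable_fun setT Y0 -> measurable_fun setT Y1 ->
  indep_pair_Z P Y0 Y1 Z -> binary_roy P Y D Y0 Y1 ->
  (sup (q10 @` Supp P Z) <= Ebin P Y0 <= Ebin P Y) /\
  (sup (q11 @` Supp P Z) <= Ebin P Y1 <= Ebin P Y).
Proof.
move=> c10 c11 ct10 ct11 m0 m1 ind [Ydef [ae1 ae0]].
have [i0 i1] := indep_both Y0 Y1 m0 m1 ind.
have mA0 : measurable (ev Y `&` ~` ev D).
  by apply: measurableI; [exact: meas_ev|apply: measurableC; exact: meas_ev].
have mA1 : measurable (ev Y `&` ev D) by apply: measurableI; exact: meas_ev.
split; apply/andP; split.
- apply: sup_le_of; first exact: Ebin_ge0.
  move=> _ [z Sz <-]; apply: (@valid_one Y0 _ _ m0 mA0 _ i0 c10 ct10 _ Sz).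
  by move=> t [Yt Dt]; rewrite /ev /= in Yt Dt *; rewrite Ydef in Yt; move: Dt Yt; case: (D t).
- apply: Ebin_le => //; apply: (negligibleS _ ae0).
  move=> t [Y0t Yt] /= H; apply: Yt; rewrite /ev /= Ydef.
  move: H; rewrite /ev /= in Y0t; rewrite Y0t /=.
  by case: (D t) => //; case: (Y1 t) => //= /(_ erefl).
- apply: sup_le_of; first exact: Ebin_ge0.
  move=> _ [z Sz <-]; apply: (@valid_one Y1 _ _ m1 mA1 _ i1 c11 ct11 _ Sz).
  by move=> t [Yt Dt]; rewrite /ev /= in Yt Dt *; rewrite Ydef in Yt; move: Dt Yt; case: (D t).
- apply: Ebin_le => //; apply: (negligibleS _ ae1).
  move=> t [Y1t Yt] /= H; apply: Yt; rewrite /ev /= Ydef.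
  move: H; rewrite /ev /= in Y1t; rewrite Y1t /=.
  by case: (D t) => //; case: (Y0 t) => //= /(_ erefl).
Qed.

End valid.


Definition dsec {d} {T : measurableType d} {R : realType}
  (mu : {measure set T -> \bar R}) {f : T -> R}
  (mf : measurable_fun setT f) (f0 : forall t, 0 <= f t) (i : nat)
  (A : set (T * nat)) : \bar R :=
  (\int[mu]_(t in ysection A i) (f t)%:E)%E.

Section dsec_measure.
Context {d} {T : measurableType d} {R : realType}.
Variable mu : {measure set T -> \bar R}.
Variable f : T -> R.
Variable mf : measurable_fun setT f.
Variable f0 : forall t, 0 <= f t.
Variable i : nat.

Let dsec0 : dsec mu mf f0 i set0 = 0%E.
Proof. by rewrite /dsec ysection0 integral_set0. Qed.

Let dsec_ge0 A : (0 <= dsec mu mf f0 i A)%E.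
Proof. by apply: integral_ge0 => t _; rewrite lee_fin. Qed.

Let dsec_sigma_additive : semi_sigma_additive (dsec mu mf f0 i).
Proof.
move=> F mF tF mUF; rewrite /dsec; apply: cvg_toP.
  apply: ereal_nondecreasing_is_cvgn => m n mn.
  apply: lee_sum_nneg_natr => // j _ _; apply: integral_ge0 => t _.
  by rewrite lee_fin.
rewrite ysection_bigcup ge0_integral_bigcup//=.
- by move=> n; apply: measurable_ysection.
- by apply/measurable_EFinP; apply: measurable_funTS.
- by move=> t _; rewrite lee_fin.
- exact: trivIset_ysection.
Qed.

HB.instance Definition _ := isMeasure.Build _ _ _
  (dsec mu mf f0 i) dsec0 dsec_ge0 dsec_sigma_additive.

End dsec_measure.

Definition Pmix {d} {T : measurableType d} {R : realType}
  (mu : {measure set T -> \bar R}) (n : nat) {F : nat -> T -> R}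
  (mF : forall i, measurable_fun setT (F i)) (F0 : forall i t, 0 <= F i t)
  (H1 : (\sum_(i < n) \int[mu]_(t in setT) (F i t)%:E = 1)%E)
  (A : set (T * nat)) : \bar R :=
  msum (fun i => dsec mu (mF i) (F0 i) i) n A.

Section Pmix_prob.
Context {d} {T : measurableType d} {R : realType}.
Variable mu : {measure set T -> \bar R}.
Variable n : nat.
Variable F : nat -> T -> R.
Variable mF : forall i, measurable_fun setT (F i).
Variable F0 : forall i t, 0 <= F i t.
Variable H1 : (\sum_(i < n) \int[mu]_(t in setT) (F i t)%:E = 1)%E.

Let Pmix0 : Pmix mu n mF F0 H1 set0 = 0%E.
Proof. exact: measure0. Qed.

Let Pmix_ge0 A : (0 <= Pmix mu n mF F0 H1 A)%E.
Proof. exact: measure_ge0. Qed.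

Let Pmix_sigma_additive : semi_sigma_additive (Pmix mu n mF F0 H1).
Proof. exact: measure_semi_sigma_additive. Qed.

HB.instance Definition _ := isMeasure.Build _ _ _
  (Pmix mu n mF F0 H1) Pmix0 Pmix_ge0 Pmix_sigma_additive.

Let Pmix_setT : Pmix mu n mF F0 H1 setT = 1%E.
Proof.
rewrite /Pmix /msum -H1; apply: eq_bigr => i _ /=; rewrite /dsec.
have -> : ysection [set: T * nat] i = setT.
  by apply/seteqP; split => t _ //=; rewrite /ysection /= in_setT.
by [].
Qed.

HB.instance Definition _ := @Measure_isProbability.Build _ _ R
  (Pmix mu n mF F0 H1) Pmix_setT.

Lemma PmixE (g : nat -> bool) (A : set T) :
  Pmix mu n mF F0 H1 [set x | A x.1 /\ g x.2] =
  (\sum_(i < n) if g i then \int[mu]_(t in A) (F i t)%:E else 0)%E.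
Proof.
rewrite /Pmix /msum; apply: eq_bigr => i _ /=; rewrite /dsec.
case gi: (g i).
  congr (integral _ _ _); apply/seteqP; split => t; rewrite /ysection /= in_setE /=.
    by case.
  by move=> At; split => //; rewrite gi.
have -> : ysection [set x : T * nat | A x.1 /\ g x.2] (i : nat) = set0.
  by apply/seteqP; split => t //=; rewrite /ysection /= in_setE /= gi => -[].
by rewrite integral_set0.
Qed.

End Pmix_prob.


Section facts.
Context {R : realType} {d : measure_display} {T : measurableType d}.
Variable P : probability T R.
Variable k : nat.
Variable Z : T -> k.-tuple R.
Hypothesis mZ : measurable_fun setT Z.

Lemma q_ge0 (A : set T) (q : k.-tuple R -> R) : measurable A ->
  cond_prob_version P A Z q -> continuous_on_set (Supp P Z) q ->
  forall z, Supp P Z z -> 0 <= q z.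
Proof.
move=> mA cq ct z Sz; rewrite -oppr_le0.
apply: (@supp_le0 _ _ _ P k Z mZ (fun w => - q w)) => //.
- exact: (measurableT_comp (@oppr_measurable R setT) cq.1).
- move=> w Sw e e0; have [dl dl0 H] := ct w Sw e e0.
  by exists dl => // v Sv Hv; rewrite opprK addrC distrC; exact: H.
- exact: (@ae_lower _ _ _ P k Z mZ A q mA cq).
Qed.

Lemma supp_ne : exists z, Supp P Z z.
Proof.
have [N [mN N0 sN]] := supp_null P k Z mZ.
apply: contra_eqP N0 => H.
have -> : Z @^-1` N = setT.
  apply/seteqP; split => t // _; apply: sN => S; apply: H; by exists (Z t).
by rewrite probability_setT.
Qed.

Lemma ae_supp : {ae P, forall t, Supp P Z (Z t)}.
Proof.
have [N [mN N0 sN]] := supp_null P k Z mZ.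
exists (Z @^-1` N); split => //; first exact: preimZ_meas.
by move=> t /= H; apply: sN.
Qed.

Lemma split_W (X W : T -> bool) b (S : set T) :
  measurable_fun setT X -> measurable_fun setT W -> measurable S ->
  P ([set t | X t = b] `&` S) =
  (P ([set t | X t = b /\ W t = true] `&` S) +
   P ([set t | X t = b /\ W t = false] `&` S))%E.
Proof.
move=> mX mW mS.
have mSb c : measurable ([set t | X t = b /\ W t = c] `&` S).
  have -> : [set t | X t = b /\ W t = c] = [set t | X t = b] `&` [set t | W t = c] by [].
  by apply: measurableI => //; apply: measurableI; exact: meas_bool.
rewrite -measureU //; last first.
  by apply/seteqP; split => t //= [[[_ h1] _] [[_ h2] _]]; congruence.
congr (P _); apply/seteqP; split => t /=.
  by case=> Xt St; case Wt: (W t); [left|right].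
by case=> -[[]].
Qed.

End facts.

Definition Dtab (i : nat) : bool := match i with 1 | 4 | 5 => true | _ => false end.
Definition Y0tab (i : nat) : bool := match i with 2 | 3 | 4 => true | _ => false end.
Definition Y1tab (i : nat) : bool := match i with 2 | 4 | 5 => true | _ => false end.
Definition Ytab (i : nat) : bool := if Dtab i then Y1tab i else Y0tab i.

Section sharp.
Context {R : realType} {d : measure_display} {T : measurableType d}.
Variable P : probability T R.
Variable k : nat.
Variable Z : T -> k.-tuple R.
Hypothesis mZ : measurable_fun setT Z.
Variables (Y D : T -> bool).
Hypotheses (mY : measurable_fun setT Y) (mD : measurable_fun setT D).
Variables (q10 q11 : k.-tuple R -> R).
Hypotheses (c10 : cond_prob_version P (ev Y `&` ~` ev D) Z q10)
  (c11 : cond_prob_version P (ev Y `&` ev D) Z q11)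
  (ct10 : continuous_on_set (Supp P Z) q10)
  (ct11 : continuous_on_set (Supp P Z) q11).
Hypothesis indY : indep_Z P Y Z.
Variables (a0 a1 : R).
Hypotheses (ha0 : sup (q10 @` Supp P Z) <= a0 <= Ebin P Y)
  (ha1 : sup (q11 @` Supp P Z) <= a1 <= Ebin P Y).

Definition Ebc (b c : bool) := [set t | Y t = b /\ D t = c].

Lemma mEbc b c : measurable (Ebc b c).
Proof.
have -> : Ebc b c = [set t | Y t = b] `&` [set t | D t = c] by [].
by apply: measurableI; exact: meas_bool.
Qed.

Lemma E10E : ev Y `&` ~` ev D = Ebc true false.
Proof.
apply/seteqP; split => t /=; rewrite /ev /=.
  by case=> h1 /negP/negbTE h2; split.
by case=> -> ->.
Qed.

Lemma E11E : ev Y `&` ev D = Ebc true true.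
Proof. by apply/seteqP; split => t /=; rewrite /ev /=. Qed.

Lemma indY1 B : measurable B ->
  P (ev Y `&` Z @^-1` B) = (P (ev Y) * P (Z @^-1` B))%E.
Proof. by move=> mB; exact (indY true B mB). Qed.

Lemma mA10 : measurable (ev Y `&` ~` ev D).
Proof. by rewrite E10E; exact: mEbc. Qed.

Lemma mA11 : measurable (ev Y `&` ev D).
Proof. by rewrite E11E; exact: mEbc. Qed.

Lemma q10_bounds z : Supp P Z z -> 0 <= q10 z <= a0.
Proof.
move=> Sz; apply/andP; split; first exact: (@q_ge0 _ _ _ P k Z mZ _ _ mA10 c10 ct10 z Sz).
have hle : forall w, Supp P Z w -> q10 w <= Ebin P Y.
  apply: (@valid_one _ _ _ P k Z mZ Y _ q10 mY mA10 _ indY1 c10 ct10).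
  by move=> t [].
have ub : has_ubound (q10 @` Supp P Z).
  by exists (Ebin P Y) => _ [w Sw <-]; exact: hle.
have := ub_le_sup ub; move=> /(_ (q10 z)) /(_ (ex_intro2 _ _ z Sz erefl)) h.
by move/andP: ha0 => [h1 _]; exact: le_trans h h1.
Qed.

Lemma q11_bounds z : Supp P Z z -> 0 <= q11 z <= a1.
Proof.
move=> Sz; apply/andP; split; first exact: (@q_ge0 _ _ _ P k Z mZ _ _ mA11 c11 ct11 z Sz).
have hle : forall w, Supp P Z w -> q11 w <= Ebin P Y.
  apply: (@valid_one _ _ _ P k Z mZ Y _ q11 mY mA11 _ indY1 c11 ct11).
  by move=> t [].
have ub : has_ubound (q11 @` Supp P Z).
  by exists (Ebin P Y) => _ [w Sw <-]; exact: hle.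
have := ub_le_sup ub; move=> /(_ (q11 z)) /(_ (ex_intro2 _ _ z Sz erefl)) h.
by move/andP: ha1 => [h1 _]; exact: le_trans h h1.
Qed.

Lemma a0_ge0 : 0 <= a0.
Proof. by have [z Sz] := supp_ne P k Z mZ; have /andP[h1 h2] := q10_bounds z Sz; exact: le_trans h1 h2. Qed.

Lemma a1_ge0 : 0 <= a1.
Proof. by have [z Sz] := supp_ne P k Z mZ; have /andP[h1 h2] := q11_bounds z Sz; exact: le_trans h1 h2. Qed.

Definition r10 z := Num.max 0 (Num.min (q10 z) a0).
Definition r11 z := Num.max 0 (Num.min (q11 z) a1).

Lemma r10_bd z : 0 <= r10 z <= a0.
Proof.
apply/andP; split; first by rewrite /r10 le_max lexx.
by rewrite /r10 ge_max a0_ge0 /= ge_min lexx orbT.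
Qed.

Lemma r11_bd z : 0 <= r11 z <= a1.
Proof.
apply/andP; split; first by rewrite /r11 le_max lexx.
by rewrite /r11 ge_max a1_ge0 /= ge_min lexx orbT.
Qed.

Lemma r10_supp z : Supp P Z z -> r10 z = q10 z.
Proof.
by move=> Sz; have /andP[h1 h2] := q10_bounds z Sz; rewrite /r10 min_l // max_r.
Qed.

Lemma r11_supp z : Supp P Z z -> r11 z = q11 z.
Proof.
by move=> Sz; have /andP[h1 h2] := q11_bounds z Sz; rewrite /r11 min_l // max_r.
Qed.

Lemma mr10 : measurable_fun setT r10.
Proof.
apply: measurable_maxr; first exact: measurable_cst.
by apply: measurable_minr; [exact: c10.1|exact: measurable_cst].
Qed.

Lemma mr11 : measurable_fun setT r11.
Proof.
apply: measurable_maxr; first exact: measurable_cst.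
by apply: measurable_minr; [exact: c11.1|exact: measurable_cst].
Qed.


Definition Fw (i : nat) (t : T) : R :=
  match i with
  | 0 => \1_(Ebc false false) t
  | 1 => \1_(Ebc false true) t
  | 2 => a1 - r11 (Z t)
  | 3 => Ebin P Y - a1
  | 4 => a0 - r10 (Z t)
  | 5 => Ebin P Y - a0
  | _ => 0 end.

Lemma mFw i : measurable_fun setT (Fw i).
Proof.
case: i => [|[|[|[|[|[|i]]]]]] /=.
- exact: measurable_indic (mEbc false false).
- exact: measurable_indic (mEbc false true).
- apply: measurable_funB; first exact: measurable_cst.
  exact: (measurableT_comp mr11 mZ).
- exact: measurable_cst.
- apply: measurable_funB; first exact: measurable_cst.
  exact: (measurableT_comp mr10 mZ).
- exact: measurable_cst.
- exact: measurable_cst.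
Qed.

Lemma Fw0 i t : 0 <= Fw i t.
Proof.
case: i => [|[|[|[|[|[|i]]]]]] /=.
- by rewrite indicE; exact: ler0n.
- by rewrite indicE; exact: ler0n.
- by rewrite subr_ge0; have /andP[] := r11_bd (Z t).
- by rewrite subr_ge0; case/andP: ha1.
- by rewrite subr_ge0; have /andP[] := r10_bd (Z t).
- by rewrite subr_ge0; case/andP: ha0.
- by [].
Qed.

Definition pr (S : set T) : R := fine (P S).

Lemma prE S : measurable S -> P S = (pr S)%:E.
Proof. by move=> mS; rewrite /pr fineK // fin_num_measure. Qed.

Definition V (i : nat) (B : set (k.-tuple R)) : R :=
  match i with
  | 0 => pr (Ebc false false `&` Z @^-1` B)
  | 1 => pr (Ebc false true `&` Z @^-1` B)
  | 2 => a1 * pr (Z @^-1` B) - pr (Ebc true true `&` Z @^-1` B)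
  | 3 => (Ebin P Y - a1) * pr (Z @^-1` B)
  | 4 => a0 * pr (Z @^-1` B) - pr (Ebc true false `&` Z @^-1` B)
  | 5 => (Ebin P Y - a0) * pr (Z @^-1` B)
  | _ => 0 end.

Lemma IntF i B : measurable B ->
  (\int[P]_(t in Z @^-1` B) (Fw i t)%:E = (V i B)%:E)%E.
Proof.
move=> mB; have mZB : measurable (Z @^-1` B) by exact: preimZ_meas.
have mI b c : measurable (Ebc b c `&` Z @^-1` B) by apply: measurableI => //; exact: mEbc.
have mrZ1 : measurable_fun (Z @^-1` B) (fun t => (r11 (Z t))%:E).
  by apply/measurable_EFinP; apply: measurable_funTS; exact: (measurableT_comp mr11 mZ).
have mrZ0 : measurable_fun (Z @^-1` B) (fun t => (r10 (Z t))%:E).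
  by apply/measurable_EFinP; apply: measurable_funTS; exact: (measurableT_comp mr10 mZ).
case: i => [|[|[|[|[|[|i]]]]]] /=.
- rewrite integral_indic //; [exact (prE _ (mI false false))|exact: mEbc].
- rewrite integral_indic //; [exact (prE _ (mI false true))|exact: mEbc].
- have key : (\int[P]_(t in Z @^-1` B) ((a1 - r11 (Z t))%:E + (r11 (Z t))%:E) =
       a1%:E * P (Z @^-1` B))%E.
    under eq_integral do rewrite -EFinD subrK.
    exact: integral_cst.
  rewrite ge0_integralD // in key; first last.
  + by move=> t _; rewrite lee_fin; have /andP[] := r11_bd (Z t).
  + by apply/measurable_EFinP; apply: measurable_funTS; exact: (mFw 2).
  + by move=> t _; rewrite lee_fin subr_ge0; have /andP[] := r11_bd (Z t).
  have e2 : (\int[P]_(t in Z @^-1` B) (r11 (Z t))%:E =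
             P (Ebc true true `&` Z @^-1` B))%E.
    rewrite -E11E c11.2 //; apply: ae_eq_integral => //.
      by apply/measurable_EFinP; apply: measurable_funTS; exact: (measurableT_comp c11.1 mZ).
    by apply: filterS (ae_supp P k Z mZ) => t St _ /=; rewrite r11_supp.
  have key2 : (\int[P]_(t in Z @^-1` B) (a1 - r11 (Z t))%:E +
     (pr (Ebc true true `&` Z @^-1` B))%:E = a1%:E * (pr (Z @^-1` B))%:E)%E.
    by rewrite -(prE _ (mI true true)) -(prE _ mZB) -e2; exact key.
  by rewrite EFinB EFinM -key2 addeK.
- by rewrite integral_cst // EFinM; congr (_ * _)%E; exact (prE _ mZB).
- have key : (\int[P]_(t in Z @^-1` B) ((a0 - r10 (Z t))%:E + (r10 (Z t))%:E) =
       a0%:E * P (Z @^-1` B))%E.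
    under eq_integral do rewrite -EFinD subrK.
    exact: integral_cst.
  rewrite ge0_integralD // in key; first last.
  + by move=> t _; rewrite lee_fin; have /andP[] := r10_bd (Z t).
  + by apply/measurable_EFinP; apply: measurable_funTS; exact: (mFw 4).
  + by move=> t _; rewrite lee_fin subr_ge0; have /andP[] := r10_bd (Z t).
  have e2 : (\int[P]_(t in Z @^-1` B) (r10 (Z t))%:E =
             P (Ebc true false `&` Z @^-1` B))%E.
    rewrite -E10E c10.2 //; apply: ae_eq_integral => //.
      by apply/measurable_EFinP; apply: measurable_funTS; exact: (measurableT_comp c10.1 mZ).
    by apply: filterS (ae_supp P k Z mZ) => t St _ /=; rewrite r10_supp.
  have key2 : (\int[P]_(t in Z @^-1` B) (a0 - r10 (Z t))%:E +
     (pr (Ebc true false `&` Z @^-1` B))%:E = a0%:E * (pr (Z @^-1` B))%:E)%E.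
    by rewrite -(prE _ (mI true false)) -(prE _ mZB) -e2; exact key.
  by rewrite EFinB EFinM -key2 addeK.
- by rewrite integral_cst // EFinM; congr (_ * _)%E; exact (prE _ mZB).
- by apply: integral0_eq.
Qed.


Lemma relY1 B : measurable B ->
  pr (Ebc true true `&` Z @^-1` B) + pr (Ebc true false `&` Z @^-1` B) =
  Ebin P Y * pr (Z @^-1` B).
Proof.
move=> mB; have mZB : measurable (Z @^-1` B) by exact: preimZ_meas.
have mI b c : measurable (Ebc b c `&` Z @^-1` B) by apply: measurableI => //; exact: mEbc.
have h := split_W P Y D true (Z @^-1` B) mY mD mZB.
have h2 := indY true B mB.
apply: EFin_inj; rewrite EFinD EFinM.
rewrite -(prE _ (mI true true)) -(prE _ (mI true false)) -(prE _ mZB).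
rewrite -(Ebin_E P Y mY).
exact (etrans (esym h) h2).
Qed.

Lemma relY0 B : measurable B ->
  pr (Ebc false true `&` Z @^-1` B) + pr (Ebc false false `&` Z @^-1` B) =
  (1 - Ebin P Y) * pr (Z @^-1` B).
Proof.
move=> mB; have mZB : measurable (Z @^-1` B) by exact: preimZ_meas.
have mI b c : measurable (Ebc b c `&` Z @^-1` B) by apply: measurableI => //; exact: mEbc.
have h := split_W P Y D false (Z @^-1` B) mY mD mZB.
have h2 := indY false B mB.
have hc : P [set t | Y t = false] = (1 - P (ev Y))%E.
  rewrite -probability_setC; last exact: meas_ev.
  by congr (P _); apply/seteqP; split => t /=; rewrite /ev /=; case: (Y t).
rewrite hc in h2.
apply: EFin_inj; rewrite EFinD EFinM EFinB.
rewrite -(prE _ (mI false true)) -(prE _ (mI false false)) -(prE _ mZB).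
rewrite -(Ebin_E P Y mY).
exact (etrans (esym h) h2).
Qed.

Lemma prT : pr (Z @^-1` setT) = 1.
Proof. by rewrite /pr preimage_setT probability_setT. Qed.

Lemma H1 : (\sum_(i < 6) \int[P]_(t in setT) (Fw i t)%:E = 1)%E.
Proof.
have e i : (\int[P]_(t in setT) (Fw i t)%:E = (V i setT)%:E)%E.
  by have := IntF i setT measurableT; rewrite preimage_setT.
under eq_bigr do rewrite e.
rewrite sumEFin !big_ord_recr big_ord0 /=; congr EFin.
have r1 := relY1 setT measurableT; have r0 := relY0 setT measurableT.
rewrite prT in r1 r0 *; rewrite /V /=; lra.
Qed.


Lemma mtab (f : nat -> bool) : measurable_fun setT (fun x : T * nat => f x.2).
Proof.
by apply: (@measurableT_comp _ _ _ _ _ _ f).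
Qed.

Lemma sharp_binary :
  exists (d' : measure_display) (T' : measurableType d')
         (P' : probability T' R) (Y' D' Y0 Y1 : T' -> bool)
         (Z' : T' -> k.-tuple R),
    [/\ measurable_fun setT Y', measurable_fun setT D',
        measurable_fun setT Z', measurable_fun setT Y0
      & measurable_fun setT Y1] /\
    same_law P P' Y D Z Y' D' Z' /\
    indep_pair_Z P' Y0 Y1 Z' /\ binary_roy P' Y' D' Y0 Y1 /\
    Ebin P' Y0 = a0 /\ Ebin P' Y1 = a1.
Proof.
pose P' := Pmix P 6 mFw Fw0 H1.
have evP (g : nat -> bool) B : measurable B -> P' [set x | (Z @^-1` B) x.1 /\ g x.2] =
    (\sum_(i < 6) if g i then V i B else 0)%:E.
  move=> mB; rewrite /P' PmixE -sumEFin; apply: eq_bigr => i _.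
  by case: (g i) => //; exact: IntF.
exists _, _, P', (fun x => Ytab x.2), (fun x => Dtab x.2),
  (fun x => Y0tab x.2), (fun x => Y1tab x.2), (fun x => Z x.1).
split.
  split; try exact: mtab.
  exact: measurableT_comp mZ measurable_fst.
have mI b c B : measurable B -> measurable (Ebc b c `&` Z @^-1` B).
  by move=> mB; apply: measurableI; [exact: mEbc|exact: preimZ_meas].
split.
  move=> b c B mB.
  have -> : [set t | Ytab t.2 = b /\ Dtab t.2 = c] `&` (fun x => Z x.1) @^-1` B =
      [set x | (Z @^-1` B) x.1 /\ (Ytab x.2 == b) && (Dtab x.2 == c)].
    apply/seteqP; split => -[t i] /=.
      by case=> -[-> ->] hB; split => //; rewrite !eqxx.
    by case=> hB /andP[/eqP -> /eqP ->].
  apply: (etrans (evP (fun i => (Ytab i == b) && (Dtab i == c)) B mB)).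
  rewrite (prE _ (mI b c B mB)); congr EFin.
  have r1 := relY1 B mB; have r0 := relY0 B mB.
  by case: b; case: c; rewrite !big_ord_recr big_ord0 /= /V /=; lra.
have r1T := relY1 setT measurableT; have r0T := relY0 setT measurableT.
rewrite prT in r1T r0T.
split.
  move=> b0 b1 B mB.
  have r1 := relY1 B mB; have r0 := relY0 B mB.
  have eS C : [set t : T * nat | Y0tab t.2 = b0 /\ Y1tab t.2 = b1] `&`
      (fun x => Z x.1) @^-1` C =
      [set x | (Z @^-1` C) x.1 /\ (Y0tab x.2 == b0) && (Y1tab x.2 == b1)].
    apply/seteqP; split => -[t i] /=.
      by case=> -[-> ->] hB; split => //; rewrite !eqxx.
    by case=> hB /andP[/eqP -> /eqP ->].
  have eT : [set t : T * nat | Y0tab t.2 = b0 /\ Y1tab t.2 = b1] =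
      [set x | (Z @^-1` setT) x.1 /\ (Y0tab x.2 == b0) && (Y1tab x.2 == b1)].
    by rewrite -eS preimage_setT setIT.
  have eZ : (fun x : T * nat => Z x.1) @^-1` B =
      [set x | (Z @^-1` B) x.1 /\ (fun _ => true) x.2].
    by apply/seteqP; split => -[t i] /=; [move=> h; split|case].
  rewrite eS eT eZ.
  have e1 := evP (fun i => (Y0tab i == b0) && (Y1tab i == b1)) B mB.
  have e2 := evP (fun i => (Y0tab i == b0) && (Y1tab i == b1)) setT measurableT.
  have e3 := evP (fun _ => true) B mB.
  transitivity ((\sum_(i < 6) if (Y0tab i == b0) && (Y1tab i == b1) then V i B else 0)%:E).
    exact e1.
  transitivity ((\sum_(i < 6) if (Y0tab i == b0) && (Y1tab i == b1) then V i setT else 0)%:E *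
     (\sum_(i < 6) if true then V i B else 0)%:E)%E; last first.
    by congr (_ * _)%E; apply: esym; [exact e2|exact e3].
  rewrite -EFinM; congr EFin.
  have x1 : pr (Ebc true true `&` Z @^-1` B) =
     Ebin P Y * pr (Z @^-1` B) - pr (Ebc true false `&` Z @^-1` B) by lra.
  have x2 : pr (Ebc true true `&` Z @^-1` setT) =
     Ebin P Y - pr (Ebc true false `&` Z @^-1` setT) by lra.
  have x3 : pr (Ebc false true `&` Z @^-1` B) =
     (1 - Ebin P Y) * pr (Z @^-1` B) - pr (Ebc false false `&` Z @^-1` B) by lra.
  clear eS eT eZ e1 e2 e3.
  case: b0; case: b1; rewrite !big_ord_recr !big_ord0 /= /V /= ?x1 ?x2 ?x3 ?prT; nra.
split.
  split => //; split; apply: aeW => -[t i] /=;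
    by case: i => [|[|[|[|[|[|i]]]]]].
have eY (f : nat -> bool) : ev (fun x : T * nat => f x.2) =
    [set x | (Z @^-1` setT) x.1 /\ f x.2].
  by apply/seteqP; split => -[t i] /=; rewrite /ev /=; [move=> h; split|case].
have x2 : pr (Ebc true true `&` Z @^-1` setT) =
   Ebin P Y - pr (Ebc true false `&` Z @^-1` setT) by lra.
split.
  rewrite /Ebin eY.
  transitivity (fine ((\sum_(i < 6) if Y0tab i then V i setT else 0)%:E)).
    by congr fine; exact (evP Y0tab setT measurableT).
  by rewrite /= !big_ord_recr !big_ord0 /= /V /= ?x2 ?prT; lra.
rewrite /Ebin eY.
transitivity (fine ((\sum_(i < 6) if Y1tab i then V i setT else 0)%:E)).
  by congr fine; exact (evP Y1tab setT measurableT).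
by rewrite /= !big_ord_recr !big_ord0 /= /V /= ?x2 ?prT; lra.
Qed.

End sharp.


Lemma alt_to_binary {R : realType} {d : measure_display} {T : measurableType d}
  (P : probability T R) (Y D : T -> bool) (Y0s Y1s : T -> R) :
  alt_binary_roy P Y D Y0s Y1s ->
  binary_roy P Y D (latent_outcome Y0s) (latent_outcome Y1s).
Proof.
case=> Ydef [a1 a0]; split => //; split.
- apply: filterS a1 => t H /andP[h1 h2]; apply: H.
  rewrite /latent_outcome -leNgt in h1 h2; lra.
- apply: filterS a0 => t H /andP[h1 h2]; apply: H.
  rewrite /latent_outcome -leNgt in h1 h2; lra.
Qed.

Lemma meas_latent {R : realType} {d : measure_display} {T : measurableType d}
  (Ys : T -> R) : measurable_fun setT Ys -> measurable_fun setT (latent_outcome Ys).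
Proof. by move=> m; apply: measurable_fun_ltr => //; exact: measurable_cst. Qed.

Lemma sign_latent {R : realType} {d : measure_display} {T : measurableType d}
  (X : T -> bool) :
  latent_outcome (fun x => if X x then (1 : R) else -1) = X.
Proof.
apply/funext => x; rewrite /latent_outcome; case: (X x) => /=.
  exact: ltr01.
by apply/negP => h; lra.
Qed.

Theorem corollary2 (R : realType) (d : measure_display) (T : measurableType d)
  (P : probability T R) (k : nat)
  (Y D : T -> bool) (Z : T -> k.-tuple R) (q10 q11 : k.-tuple R -> R) :
  measurable_fun setT Y -> measurable_fun setT D -> measurable_fun setT Z ->
  cond_prob_version P (ev Y `&` ~` ev D) Z q10 ->
  cond_prob_version P (ev Y `&` ev D) Z q11 ->
  continuous_on_set (Supp P Z) q10 -> continuous_on_set (Supp P Z) q11 ->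
  let qbar10 := sup (q10 @` Supp P Z) in
  let qbar11 := sup (q11 @` Supp P Z) in
  (forall Y0 Y1 : T -> bool,
     measurable_fun setT Y0 -> measurable_fun setT Y1 ->
     indep_pair_Z P Y0 Y1 Z -> binary_roy P Y D Y0 Y1 ->
     (qbar10 <= Ebin P Y0 <= Ebin P Y) /\ (qbar11 <= Ebin P Y1 <= Ebin P Y)) /\
  (forall Y0s Y1s : T -> R,
     measurable_fun setT Y0s -> measurable_fun setT Y1s ->
     indep_pair_Z P (latent_outcome Y0s) (latent_outcome Y1s) Z ->
     alt_binary_roy P Y D Y0s Y1s ->
     (qbar10 <= Ebin P (latent_outcome Y0s) <= Ebin P Y) /\
     (qbar11 <= Ebin P (latent_outcome Y1s) <= Ebin P Y)) /\
  (indep_Z P Y Z -> forall a0 a1 : R,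
     qbar10 <= a0 <= Ebin P Y -> qbar11 <= a1 <= Ebin P Y ->
     exists (d' : measure_display) (T' : measurableType d')
            (P' : probability T' R) (Y' D' Y0 Y1 : T' -> bool)
            (Z' : T' -> k.-tuple R),
       [/\ measurable_fun setT Y', measurable_fun setT D',
           measurable_fun setT Z', measurable_fun setT Y0
         & measurable_fun setT Y1] /\
       same_law P P' Y D Z Y' D' Z' /\
       indep_pair_Z P' Y0 Y1 Z' /\ binary_roy P' Y' D' Y0 Y1 /\
       Ebin P' Y0 = a0 /\ Ebin P' Y1 = a1) /\
  (indep_Z P Y Z -> forall a0 a1 : R,
     qbar10 <= a0 <= Ebin P Y -> qbar11 <= a1 <= Ebin P Y ->
     exists (d' : measure_display) (T' : measurableType d')
            (P' : probability T' R) (Y' D' : T' -> bool)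
            (Y0s Y1s : T' -> R) (Z' : T' -> k.-tuple R),
       [/\ measurable_fun setT Y', measurable_fun setT D',
           measurable_fun setT Z', measurable_fun setT Y0s
         & measurable_fun setT Y1s] /\
       same_law P P' Y D Z Y' D' Z' /\
       indep_pair_Z P' (latent_outcome Y0s) (latent_outcome Y1s) Z' /\
       alt_binary_roy P' Y' D' Y0s Y1s /\
       Ebin P' (latent_outcome Y0s) = a0 /\ Ebin P' (latent_outcome Y1s) = a1).
Proof.
move=> mY mD mZ c10 c11 ct10 ct11 qbar10 qbar11.
split.
  move=> Y0 Y1 m0 m1 ind roy.
  exact: (valid_binary P k Z mZ Y D mY mD q10 q11 Y0 Y1 c10 c11 ct10 ct11 m0 m1 ind roy).
split.
  move=> Y0s Y1s m0 m1 ind alt.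
  exact (valid_binary P k Z mZ Y D mY mD q10 q11 _ _ c10 c11 ct10 ct11
    (meas_latent Y0s m0) (meas_latent Y1s m1) ind (alt_to_binary P Y D Y0s Y1s alt)).
split.
  move=> indY a0 a1 h0 h1.
  exact: (sharp_binary P k Z mZ Y D mY mD q10 q11 c10 c11 ct10 ct11 indY a0 a1 h0 h1).
move=> indY a0 a1 h0 h1.
have [d' [T' [P' [Y' [D' [Y0 [Y1 [Z' [[mY' mD' mZ' m0 m1] [sl [ind [roy [e0 e1]]]]]]]]]]]]] :=
  sharp_binary P k Z mZ Y D mY mD q10 q11 c10 c11 ct10 ct11 indY a0 a1 h0 h1.
exists d', T', P', Y', D', (fun x => if Y0 x then (1 : R) else -1),
  (fun x => if Y1 x then (1 : R) else -1), Z'.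
rewrite !sign_latent.
split.
  split => //.
  - by apply: (measurableT_comp (f := fun b : bool => if b then (1 : R) else -1)).
  - by apply: (measurableT_comp (f := fun b : bool => if b then (1 : R) else -1)).
split => //; split => //; split => //.
case: roy => Ydef [ae1 ae0]; split.
  by move=> x; rewrite !sign_latent.
split.
- apply: filterS ae1 => x H; case: (Y0 x) H; case: (Y1 x) => //= H h;
    try (exfalso; lra).
  exact: H.
- apply: filterS ae0 => x H; case: (Y0 x) H; case: (Y1 x) => //= H h;
    try (exfalso; lra).
  exact: H.
Qed.
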